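(* Let $\mathbf{B}_{t|t-1}$, $\mathbf{B}_{t|t}$, $\bm{\Lambda}_t$, $\mathbf{L}_t$ be defined as in the multi-resolution filter. Assume that $\mathbf{R}_t$ and $\mathbf{H}_t$ are block-diagonal with blocks corresponding to the finest subregions, i.e.: for $i \in \mathcal{I}_{i_1,\ldots,i_M}$ and $j \in \mathcal{I}_{j_1,\ldots,j_M}$, $\mathbf{R}_t[i,j]=0$ unless $(i_1,\ldots,i_M)=(j_1,\ldots,j_M)$; if $\mathbf{H}_t[i,j]\neq 0$ then $\mathbf{H}_t[i,k]=0$ for all $k\notin \mathcal{I}_{j_1,\ldots,j_M}$; and if $i_1,i_2\in\mathcal{I}_{j_1,\ldots,j_M}$ with $i_1<i_2$, then every $i_3$ with $i_1<i_3<i_2$ also lies in $\mathcal{I}_{j_1,\ldots,j_M}$. Then: 1. $\bm{\Lambda}_t \in \mathcal{S}(\mathbf{B}_{t|t-1}'\mathbf{B}_{t|t-1})$; 2. $\mathbf{L}_t \in \mathcal{S}(\bm{\Lambda}_t^L)$ and $\mathbf{L}_t^{-1} \in \mathcal{S}(\bm{\Lambda}_t^L)$; 3. $\mathbf{B}_{t|t} \in \mathcal{S}(\mathbf{B}_{t|t-1})$.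
   Context: Linear Gaussian state-space model $\mathbf{y}_t=\mathbf{H}_t\mathbf{x}_t+\mathbf{v}_t$, $\mathbf{v}_t\sim\mathcal{N}(\mathbf{0},\mathbf{R}_t)$, $\mathbf{x}_t=\mathbf{A}_t\mathbf{x}_{t-1}+\mathbf{w}_t$, $\mathbf{w}_t\sim\mathcal{N}(\mathbf{0},\mathbf{Q}_t)$, with state on a grid of $n_\mathcal{G}$ points in a domain $\mathcal{D}$. The domain is recursively partitioned into $J$ subregions per level up to resolution $M$, giving regions $\mathcal{D}_{j_1,\ldots,j_m}$ with grid index sets $\mathcal{I}_{j_1,\ldots,j_m}$; knot sets $\mathcal{K}_{j_1,\ldots,j_m}\subset\mathcal{I}_{j_1,\ldots,j_m}$ of size $r_m$ partition $\{1,\ldots,n_\mathcal{G}\}$; grid elements are ordered lexicographically by finest region. The multi-resolution decomposition (MRD) of a covariance matrix $\bm{\Sigma}$ returns $\mathbf{B}=(\mathbf{B}^M,\ldots,\mathbf{B}^0)$ with $\mathbf{B}^m$ block-diagonal with blocks of size $|\mathcal{I}_{j_1,\ldots,j_m}|\times r_m$. In the multi-resolution filter, $\mathbf{B}_{t|t-1}=\mathrm{MRD}(\mathbf{A}_t\mathbf{B}_{t-1|t-1}\mathbf{B}_{t-1|t-1}'\mathbf{A}_t'+\mathbf{Q}_t)$, $\bm{\Lambda}_t=\mathbf{I}_{n_\mathcal{G}}+\mathbf{B}_{t|t-1}'\mathbf{H}_t'\mathbf{R}_t^{-1}\mathbf{H}_t\mathbf{B}_{t|t-1}$, $\mathbf{L}_t$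 is the lower Cholesky triangle of $\bm{\Lambda}_t$, and $\mathbf{B}_{t|t}=\mathbf{B}_{t|t-1}(\mathbf{L}_t^{-1})'$. $\mathcal{S}(\mathbf{G})$ denotes the set of matrices whose structural zeros include those of $\mathbf{G}$; $\mathbf{G}^L$ is the lower triangle of $\mathbf{G}$. *)

(* Defs.v *)
From HB Require Import structures.
From mathcomp Require Import all_boot all_order all_algebra.
Set Implicit Arguments. Unset Strict Implicit. Unset Printing Implicit Defensive.
Import Order.TTheory GRing.Theory Num.Theory.
Local Open Scope ring_scope.

(* S(G): matrices whose zeros include the structural zeros of G. *)
Definition inS (R : ringType) (m n : nat) (A : 'M[R]_(m, n))
  (G : 'I_m -> 'I_n -> bool) : Prop :=
  forall i j, ~~ G i j -> A i j = 0.

Definition pat_tmul (m n : nat) (G : 'I_m -> 'I_n -> bool) : 'I_n -> 'I_n -> bool :=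
  fun c d => [exists i, G i c && G i d].

Definition pat_lower (n : nat) (G : 'I_n -> 'I_n -> bool) : 'I_n -> 'I_n -> bool :=
  fun i j => G i j && (j <= i)%N.

Fixpoint lexle (J : nat) (s t : seq 'I_J) : bool :=
  match s, t with
  | [::], _ => true
  | _ :: _, [::] => false
  | x :: s', y :: t' => ((x < y)%N || ((x == y) && lexle s' t'))
  end.

(* Grid point i has finest region reg i = (j_1,...,j_M); its level-m region is
   take m (reg i).  Column c of B = (B^M,...,B^0) is a knot of the region
   creg c = (j_1,...,j_{clev c}) at resolution clev c.
   MRD structure of B: B[i,c] may be nonzero only if i lies in that region. *)
Definition mrd_pattern (J M n : nat) (reg : 'I_n -> M.-tuple 'I_J)
  (clev : 'I_n -> nat) (creg : 'I_n -> seq 'I_J) : 'I_n -> 'I_n -> bool :=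
  fun i c => take (clev c) (reg i) == creg c.

(* The multi-resolution setup:
   - grid points ordered lexicographically by finest region;
   - every column's region address has length equal to its level, level <= M;
   - each region at resolution m has exactly r m knots (columns);
   - knots are grid points of their region, and the knot sets partition the grid
     (knot : column -> grid index is a bijection);
   - columns ordered as (B^M, ..., B^0), within B^m by region in lexicographic
     order (block-diagonal structure of B^m w.r.t. the lexicographic grid order). *)
Definition mr_setup (J M n : nat) (r : nat -> nat) (reg : 'I_n -> M.-tuple 'I_J)
  (clev : 'I_n -> nat) (creg : 'I_n -> seq 'I_J) (knot : 'I_n -> 'I_n) : Prop :=
  [/\ (forall i j : 'I_n, (i < j)%N -> lexle (reg i) (reg j)),
      (forall c, size (creg c) = clev c /\ (clev c <= M)%N),
      (forall (m : nat) (a : m.-tuple 'I_J), (m <= M)%N ->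
          #|[set c | (clev c == m) && (creg c == tval a)]| = r m),
      bijective knot /\ (forall c, take (clev c) (reg (knot c)) = creg c)
    & (forall c d : 'I_n, (c < d)%N ->
          (clev d < clev c)%N || ((clev d == clev c) && lexle (creg c) (creg d)))].

Definition Lambda (R : comUnitRingType) (n p : nat) (B : 'M[R]_n)
  (H : 'M[R]_(p, n)) (Rt : 'M[R]_p) : 'M[R]_n :=
  1%:M + B^T *m H^T *m invmx Rt *m H *m B.

Definition is_lower_cholesky (R : realFieldType) (n : nat) (L Lam : 'M[R]_n) : Prop :=
  [/\ (forall i j : 'I_n, (i < j)%N -> L i j = 0),
      (forall i : 'I_n, 0 < L i i)
    & L *m L^T = Lam].

Definition spd (R : realFieldType) (p : nat) (A : 'M[R]_p) : Prop :=
  A^T = A /\ (forall v : 'cV[R]_p, v != 0 -> 0 < (v^T *m A *m v) ord0 ord0).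

(* Main.v *)
Require Import Defs.
From HB Require Import structures.
From mathcomp Require Import all_boot all_order all_algebra.
Import Order.TTheory GRing.Theory Num.Theory.
Local Open Scope ring_scope.
Set Implicit Arguments.

Lemma P_chain J M n (reg : 'I_n -> M.-tuple 'I_J) (clev : 'I_n -> nat)
  (creg : 'I_n -> seq 'I_J) (a k b : 'I_n) :
  (clev a <= clev k)%N -> pat_tmul (mrd_pattern reg clev creg) a k ->
  pat_tmul (mrd_pattern reg clev creg) k b -> pat_tmul (mrd_pattern reg clev creg) a b.
Proof.
move=> hak; rewrite /pat_tmul /mrd_pattern.
move=> /existsP[g1 /andP[/eqP g1a /eqP g1k]] /existsP[g /andP[/eqP gk /eqP gb]].
apply/existsP; exists g; rewrite gb eqxx andbT.
by rewrite -(take_takel _ hak) gk -g1k take_takel // g1a.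
Qed.

Lemma P_sym J M n (reg : 'I_n -> M.-tuple 'I_J) (clev : 'I_n -> nat)
  (creg : 'I_n -> seq 'I_J) (a b : 'I_n) :
  pat_tmul (mrd_pattern reg clev creg) a b -> pat_tmul (mrd_pattern reg clev creg) b a.
Proof.
by move=> /existsP[g hg]; apply/existsP; exists g; rewrite andbC.
Qed.

Lemma G_chain J M n (reg : 'I_n -> M.-tuple 'I_J) (clev : 'I_n -> nat)
  (creg : 'I_n -> seq 'I_J) (i c d : 'I_n) :
  mrd_pattern reg clev creg i d -> pat_tmul (mrd_pattern reg clev creg) c d ->
  (clev c <= clev d)%N -> mrd_pattern reg clev creg i c.
Proof.
rewrite /pat_tmul /mrd_pattern => /eqP hid /existsP[g /andP[/eqP gc /eqP gd]] hcd.
by rewrite -(take_takel _ hcd) hid -gd take_takel // gc.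
Qed.

Lemma invmx_blockdiag (R : comUnitRingType) (T : eqType) p (f : 'I_p -> T)
  (A : 'M[R]_p) : (forall i j, f i != f j -> A i j = 0) ->
  forall i j, f i != f j -> invmx A i j = 0.
Proof.
move=> hA i j hij.
case: (boolP (A \in unitmx)) => hu; last by rewrite invmx_out ?inE // hA.
set D := diag_mx (\row_k ((f k == f j)%:R : R)).
have hc : D *m A = A *m D.
  apply/matrixP => k l; rewrite mul_diag_mx mul_mx_diag !mxE.
  have [ekl|nkl] := eqVneq (f k) (f l); first by rewrite ekl mulrC.
  by rewrite hA // mulr0 mul0r.
have hc' : invmx A *m D = D *m invmx A.
  rewrite -[invmx A *m D]mulmx1 -(mulmxV hu) !mulmxA -(mulmxA _ D A) hc mulmxA.
  by rewrite (mulVmx hu) mul1mx.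
have := congr1 (fun X : 'M[R]_p => X i j) hc'.
by rewrite /= mul_diag_mx mul_mx_diag !mxE eqxx (negbTE hij) /= mulr1 mul0r.
Qed.

Unset Implicit Arguments.

Theorem proposition3
  (R : realFieldType) (J M n p : nat) (r : nat -> nat)
  (reg : 'I_n -> M.-tuple 'I_J) (clev : 'I_n -> nat) (creg : 'I_n -> seq 'I_J)
  (knot : 'I_n -> 'I_n)
  (obsreg : 'I_p -> M.-tuple 'I_J)
  (Bpred : 'M[R]_n) (H : 'M[R]_(p, n)) (Rt : 'M[R]_p) (L : 'M[R]_n) :
  mr_setup r reg clev creg knot ->
  (* B_{t|t-1} is the output of an MRD: block structure of (B^M,...,B^0) *)
  inS Bpred (mrd_pattern reg clev creg) ->
  (* R_t is a covariance matrix *)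
  spd Rt ->
  (* observations are grouped by finest region, contiguously *)
  (forall i1 i2 i3 : 'I_p, (i1 < i3)%N -> (i3 < i2)%N ->
      obsreg i1 = obsreg i2 -> obsreg i3 = obsreg i1) ->
  (* R_t block-diagonal w.r.t. finest subregions *)
  (forall i j : 'I_p, obsreg i != obsreg j -> Rt i j = 0) ->
  (* H_t block-diagonal w.r.t. finest subregions *)
  (forall (i : 'I_p) (j : 'I_n), obsreg i != reg j -> H i j = 0) ->
  is_lower_cholesky L (Lambda Bpred H Rt) ->
  [/\ inS (Lambda Bpred H Rt) (pat_tmul (mrd_pattern reg clev creg)),
      inS L (pat_lower (pat_tmul (mrd_pattern reg clev creg))),
      inS (invmx L) (pat_lower (pat_tmul (mrd_pattern reg clev creg)))
    & inS (Bpred *m (invmx L)^T) (mrd_pattern reg clev creg)].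
Proof.
move=> [hlex hsz hcard [hbij hknot] hord] hB hspd hcont hR hH [Llow Lpos LLt].
set G := mrd_pattern reg clev creg.
set P := pat_tmul G.
have mono : forall c d : 'I_n, (c <= d)%N -> (clev d <= clev c)%N.
  move=> c d cd; have [/hord/orP[/ltnW//|/andP[/eqP-> _]//]|dc] := ltnP c d.
  have -> : c = d by apply/val_inj/eqP; rewrite eqn_leq cd dc.
  by [].
have Prefl : forall c, P c c.
  by move=> c; apply/existsP; exists (knot c); rewrite /G /mrd_pattern hknot eqxx.
have Rinv : forall k l, obsreg k != obsreg l -> invmx Rt k l = 0 :=
  @invmx_blockdiag R _ p obsreg Rt hR.
set Mid := H^T *m invmx Rt *m H.
have HM : forall i j : 'I_n, reg i != reg j -> Mid i j = 0.
  move=> i j hij; rewrite mxE big1 // => l _; rewrite mxE.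
  have [e1|n1] := eqVneq (obsreg l) (reg j); last by rewrite hH // mulr0.
  rewrite big1 ?mul0r // => k _; rewrite mxE.
  have [e2|n2] := eqVneq (obsreg k) (reg i); last by rewrite hH // mul0r.
  by rewrite Rinv ?mulr0 // e1 e2.
have part1 : inS (Lambda Bpred H Rt) P.
  move=> c d hcd; rewrite /Lambda.
  have -> : Bpred^T *m H^T *m invmx Rt *m H *m Bpred = Bpred^T *m Mid *m Bpred
    by rewrite /Mid !mulmxA.
  rewrite !mxE.
  have cd : c != d by apply: contraNneq hcd => ->; apply: Prefl.
  rewrite (negbTE cd) add0r big1 // => j _; rewrite mxE big_distrl big1 // => i _ /=.
  rewrite mxE.
  have [gic|ngic] := boolP (G i c); last by rewrite (hB i c) // !mul0r.
  have [gjd|ngjd] := boolP (G j d); last by rewrite (hB j d) // mulr0.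
  have [e|ne] := eqVneq (reg i) (reg j); last by rewrite HM // mulr0 mul0r.
  exfalso; move/negP: hcd; apply; apply/existsP; exists i; rewrite gic /=.
  by move: gjd; rewrite /G /mrd_pattern e.
have key : forall m (j : 'I_n), nat_of_ord j = m ->
    forall i : 'I_n, ~~ pat_lower P i j -> L i j = 0.
  elim/ltn_ind => m IH j hj i hij.
  have [ij|ji] := ltnP i j; first exact: Llow.
  have nP : ~~ P i j by move: hij; rewrite /pat_lower ji andbT.
  have e : \sum_k L i k * L j k = 0.
    transitivity (Lambda Bpred H Rt i j); last exact: part1.
    by rewrite -LLt mxE; apply: eq_bigr => k _; rewrite mxE.
  have z : \sum_(k | k != j) L i k * L j k = 0.
    apply: big1 => k kj.
    have [jk|kj'] := ltnP j k; first by rewrite (Llow j k jk) mulr0.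
    have kltj : (k < j)%N by rewrite ltn_neqAle kj' andbT; exact: kj.
    have km : (k < m)%N by rewrite -hj.
    have [pik|npik] := boolP (pat_lower P i k); last by rewrite (IH _ km k erefl i npik) mul0r.
    have [pjk|npjk] := boolP (pat_lower P j k); last by rewrite (IH _ km k erefl j npjk) mulr0.
    exfalso; move/negP: nP; apply.
    move/andP: pik => [pik ki]; move/andP: pjk => [pjk _].
    apply: (@P_chain _ _ _ reg clev creg i k j) => //; last exact: P_sym.
    by apply: mono.
  rewrite (bigD1 j) //= z addr0 in e.
  by apply: (mulIf (lt0r_neq0 (Lpos j))); rewrite mul0r.
have part2 : inS L (pat_lower P).
  move=> a b; exact: (key b b erefl a).
have uL : L \in unitmx.
  rewrite unitmxE det_trig; last by apply/is_trig_mxP.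
  rewrite unitfE; apply: lt0r_neq0; apply: prodr_gt0 => i _; exact: Lpos.
set N := invmx L.
have LN : L *m N = 1%:M := mulmxV uL.
have key2 : forall m (i : 'I_n), nat_of_ord i = m ->
    forall j, ~~ pat_lower P i j -> N i j = 0.
  elim/ltn_ind => m IH i hi j hij.
  have e : \sum_k L i k * N k j = (i == j)%:R.
    by have := congr1 (fun X : 'M[R]_n => X i j) LN; rewrite /= !mxE.
  have ij : i != j.
    by apply: contraNneq hij => ->; rewrite /pat_lower Prefl leqnn.
  have z : \sum_(k | k != i) L i k * N k j = 0.
    apply: big1 => k ki.
    have [ik|ki'] := ltnP i k; first by rewrite Llow // mul0r.
    have klti : (k < i)%N by rewrite ltn_neqAle ki' andbT; exact: ki.
    have km : (k < m)%N by rewrite -hi.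
    have [lk|nlk] := boolP (pat_lower P i k); last by rewrite part2 // mul0r.
    have [nk|nnk] := boolP (pat_lower P k j); last by rewrite (IH _ km k erefl j nnk) mulr0.
    exfalso; move/negP: hij; apply.
    move/andP: lk => [lk _]; move/andP: nk => [nk jk].
    rewrite /pat_lower (leq_trans jk ki') andbT.
    by apply: (@P_chain _ _ _ reg clev creg i k j) => //; apply: mono.
  rewrite (negbTE ij) (bigD1 i) //= z addr0 in e.
  by apply: (mulfI (lt0r_neq0 (Lpos i))); rewrite mulr0.
have part3 : inS N (pat_lower P).
  move=> a b; exact: (key2 a a erefl b).
have part4 : inS (Bpred *m N^T) G.
  move=> i c hic; rewrite mxE big1 // => d _; rewrite mxE.
  have [gid|ngid] := boolP (G i d); last by rewrite hB // mul0r.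
  have [pcd|npcd] := boolP (pat_lower P c d); last by rewrite part3 // mulr0.
  exfalso; move/negP: hic; apply; move/andP: pcd => [pcd dc].
  exact: G_chain gid pcd (mono d c dc).
by split.
Qed.
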